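(* For every integer $m\ge0$ and every $z\in\mathfrak U$, the $2m$-th derivative satisfies $T^{(2m)}(z)\neq0$.
   Context: Let $V_0<V_1<\dots<V_n$ be real, $\beta_1,\dots,\beta_n\in[-1,1]$, $\beta_0:=-1$, $\beta_{n+1}:=1$, with $\beta_i\ne\beta_{i+1}$ for all $0\le i\le n$. Define $$T(z)=\sum_{i=0}^n\tfrac12(\beta_{i+1}-\beta_i)\frac1{z-e^{V_i}}$$ and $$\mathfrak U=(-\infty,e^{V_0})\cup(e^{V_n},\infty)\cup\bigcup_{1\le i\le n,\ \beta_i=\pm1}(e^{V_{i-1}},e^{V_i}).$$ *)

(* Defs.v *)
From Stdlib Require Import Reals.
From Coquelicot Require Import Coquelicot.
Open Scope R_scope.

Definition beta_ext (n : nat) (beta : nat -> R) (i : nat) : R :=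
  if Nat.eqb i 0 then -1 else if Nat.eqb i (S n) then 1 else beta i.

Definition Tfun (n : nat) (V beta : nat -> R) (z : R) : R :=
  sum_f_R0 (fun i => / 2 * (beta_ext n beta (S i) - beta_ext n beta i)
                       / (z - exp (V i))) n.

Definition in_U (n : nat) (V beta : nat -> R) (z : R) : Prop :=
  z < exp (V 0%nat) \/ exp (V n) < z \/
  exists i : nat, (1 <= i <= n)%nat /\ (beta i = 1 \/ beta i = -1) /\
    exp (V (i - 1)%nat) < z < exp (V i).

(* Main.v *)
Require Import Defs.
From Stdlib Require Import Reals Lra Lia Arith Factorial.
From Coquelicot Require Import Coquelicot.
Open Scope R_scope.

Fixpoint msum (f : nat -> R) (n : nat) : R :=
  match n with O => 0 | S k => msum f k + f k end.

Lemma msum_le f g n : (forall j, (j < n)%nat -> f j <= g j) -> msum f n <= msum g n.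
Proof.
  induction n; simpl; intros H. lra.
  assert (msum f n <= msum g n) by (apply IHn; intros; apply H; lia).
  assert (f n <= g n) by (apply H; lia). lra.
Qed.

Lemma msum_tel s n : msum (fun j => s j - s (S j)) n = s O - s n.
Proof. induction n; simpl; [lra | rewrite IHn; lra]. Qed.

Lemma msum_tel' s n : msum (fun j => s (S j) - s j) n = s n - s O.
Proof. induction n; simpl; [lra | rewrite IHn; lra]. Qed.

Lemma abel (b s : nat -> R) n : b O = -1 ->
  sum_f_R0 (fun i => / 2 * (b (S i) - b i) * s i) n =
  b (S n) * s n / 2 + s O / 2 + / 2 * msum (fun j => b (S j) * (s j - s (S j))) n.
Proof.
  intros Hb; induction n; simpl.
  - rewrite Hb; field.
  - rewrite IHn; field.
Qed.

Lemma pow_lt_pos u v k : 0 < u -> u < v -> u ^ k < v ^ k \/ k = O.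
Proof.
  intros Hu Huv; induction k. right; reflexivity. left; simpl.
  destruct IHk as [H|H].
  - assert (0 < u ^ k) by (apply pow_lt; lra). nra.
  - subst; simpl; lra.
Qed.

Lemma odd_pow_neg x m : (- x) ^ (2 * m + 1) = - (x ^ (2 * m + 1)).
Proof.
  rewrite !pow_add, !pow_mult. replace ((- x) ^ 2) with (x ^ 2) by ring. ring.
Qed.

Lemma inv_pow_mono u v m : u < v -> (0 < u \/ v < 0) ->
  / v ^ (2 * m + 1) < / u ^ (2 * m + 1).
Proof.
  intros Huv [Hu|Hv].
  - destruct (pow_lt_pos u v (2*m+1) Hu Huv) as [H|H]; [|lia].
    apply Rinv_lt_contravar; [|exact H].
    apply Rmult_lt_0_compat; apply pow_lt; lra.
  - destruct (pow_lt_pos (-v) (-u) (2*m+1)) as [H|H]; try lra; [|lia].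
    rewrite !odd_pow_neg in H.
    assert (0 < v ^ (2*m+1) * u ^ (2*m+1)).
    { replace (v ^ (2*m+1) * u ^ (2*m+1)) with ((-v)^(2*m+1) * (-u)^(2*m+1))
        by (rewrite !odd_pow_neg; ring).
      apply Rmult_lt_0_compat; apply pow_lt; lra. }
    apply Rinv_lt_contravar; lra.
Qed.

Lemma inv_pow_pos u m : 0 < u -> 0 < / u ^ (2*m+1).
Proof. intros; apply Rinv_0_lt_compat, pow_lt; lra. Qed.

Lemma inv_pow_neg u m : u < 0 -> / u ^ (2*m+1) < 0.
Proof.
  intros H. assert (0 < (-u) ^ (2*m+1)) by (apply pow_lt; lra).
  rewrite odd_pow_neg in H0. apply Rinv_lt_0_compat. lra.
Qed.

Lemma is_derive_sum (f f' : nat -> R -> R) x n :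
  (forall i, (i <= n)%nat -> is_derive (f i) x (f' i x)) ->
  is_derive (fun y => sum_f_R0 (fun i => f i y) n) x (sum_f_R0 (fun i => f' i x) n).
Proof.
  induction n; intros H; simpl.
  - apply H; lia.
  - apply (is_derive_plus (fun y => sum_f_R0 (fun i => f i y) n) (f (S n))).
    + apply IHn; intros; apply H; lia.
    + apply H; lia.
Qed.

Definition G (c a : nat -> R) n k x :=
  sum_f_R0 (fun i => c i * ((-1) ^ k * INR (fact k) * / (x - a i) ^ (S k))) n.

Lemma G_derive c a n k x : (forall i, (i <= n)%nat -> x <> a i) ->
  is_derive (G c a n k) x (G c a n (S k) x).
Proof.
  intros D. unfold G.
  apply (is_derive_sum (fun i y => c i * ((-1) ^ k * INR (fact k) * / (y - a i) ^ (S k)))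
      (fun i y => c i * ((-1) ^ (S k) * INR (fact (S k)) * / (y - a i) ^ (S (S k))))).
  intros i Hi. specialize (D i Hi).
  assert (x - a i <> 0) by lra.
  assert (P : forall j, (x - a i) ^ j <> 0) by (intros; apply pow_nonzero; auto).
  auto_derive.
  - exact (P (S k)).
  - rewrite fact_simpl, mult_INR. pose proof (P k) as Pk. unfold Rminus in *.
    destruct k; simpl; field; repeat split; auto.
Qed.

Lemma loc_D (a : nat -> R) n x : (forall i, (i <= n)%nat -> x <> a i) ->
  locally x (fun y => forall i, (i <= n)%nat -> y <> a i).
Proof.
  induction n; intros D.
  - assert (Hx : x <> a O) by (apply D; lia).
    destruct (Rlt_or_le x (a O)) as [H|H].
    + apply (filter_imp (fun u => u < a O)). { intros y Hy i Hi. assert (i = O) by lia. subst. lra. }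
      apply open_lt; auto.
    + apply (filter_imp (fun u => a O < u)). { intros y Hy i Hi. assert (i = O) by lia. subst. lra. }
      apply open_gt; lra.
  - assert (Hx : x <> a (S n)) by (apply D; lia).
    assert (L1 : locally x (fun y => forall i, (i <= n)%nat -> y <> a i)) by (apply IHn; intros; apply D; lia).
    assert (L2 : locally x (fun y => y <> a (S n))).
    { destruct (Rlt_or_le x (a (S n))) as [H|H].
      + apply (filter_imp (fun u => u < a (S n))). { intros; lra. } apply open_lt; auto.
      + apply (filter_imp (fun u => a (S n) < u)). { intros; lra. } apply open_gt; lra. }
    generalize (filter_and _ _ L1 L2). apply filter_imp.
    intros y [H1 H2] i Hi.
    destruct (Nat.eq_dec i (S n)). subst; auto. apply H1; lia.
Qed.

Lemma Derive_n_G (f : R -> R) c a n :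
  (forall x, (forall i, (i <= n)%nat -> x <> a i) -> f x = G c a n 0 x) ->
  forall k x, (forall i, (i <= n)%nat -> x <> a i) -> Derive_n f k x = G c a n k x.
Proof.
  intros H0 k. induction k; intros x D.
  - simpl. apply H0; auto.
  - simpl. rewrite (Derive_ext_loc _ (G c a n k)).
    + apply is_derive_unique, G_derive; auto.
    + apply (filter_imp _ _ (fun y Hy => IHk y Hy)). apply loc_D; auto.
Qed.

Lemma keyA (b s : nat -> R) n : b O = -1 -> b (S n) = 1 ->
  (forall j, (j < n)%nat -> 0 <= (b (S j) - 1) * (s j - s (S j))) ->
  s O <= sum_f_R0 (fun i => / 2 * (b (S i) - b i) * s i) n.
Proof.
  intros H0 Hn H. rewrite abel by auto. rewrite Hn.
  assert (msum (fun j => s j - s (S j)) n <= msum (fun j => b (S j) * (s j - s (S j))) n).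
  { apply msum_le. intros j Hj. specialize (H j Hj). nra. }
  rewrite msum_tel in H1. lra.
Qed.

Lemma keyB (b s : nat -> R) n : b O = -1 -> b (S n) = 1 ->
  (forall j, (j < n)%nat -> (b (S j) + 1) * (s j - s (S j)) <= 0) ->
  sum_f_R0 (fun i => / 2 * (b (S i) - b i) * s i) n <= s n.
Proof.
  intros H0 Hn H. rewrite abel by auto. rewrite Hn.
  assert (msum (fun j => b (S j) * (s j - s (S j))) n <= msum (fun j => s (S j) - s j) n).
  { apply msum_le. intros j Hj. specialize (H j Hj). nra. }
  rewrite msum_tel' in H1. lra.
Qed.

Theorem lemma4p2 (n : nat) (V beta : nat -> R)
  (hV : forall i : nat, (i < n)%nat -> V i < V (S i))
  (hbeta : forall i : nat, (1 <= i <= n)%nat -> -1 <= beta i <= 1)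
  (hneq : forall i : nat, (i <= n)%nat -> beta_ext n beta i <> beta_ext n beta (S i))
  (m : nat) (z : R) (hz : in_U n V beta z) :
  Derive_n (Tfun n V beta) (2 * m) z <> 0.
Proof.
  set (a := fun i => exp (V i)).
  set (b := beta_ext n beta).
  set (c := fun i => / 2 * (b (S i) - b i)).
  set (s := fun i => / (z - a i) ^ (2 * m + 1)).
  assert (mono : forall i j, (i < j <= n)%nat -> a i < a j).
  { intros i j [Hij Hjn]. induction Hij.
    - unfold a; apply exp_increasing, hV; lia.
    - apply Rlt_trans with (a m0). apply IHHij; lia. unfold a; apply exp_increasing, hV; lia. }
  assert (monole : forall i j, (i <= j <= n)%nat -> a i <= a j).
  { intros i j H. destruct (Nat.eq_dec i j). subst; lra. apply Rlt_le, mono; lia. }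
  assert (b0 : b O = -1) by reflexivity.
  assert (bn : b (S n) = 1).
  { unfold b, beta_ext. simpl. rewrite Nat.eqb_refl. reflexivity. }
  assert (bj : forall j, (j < n)%nat -> b (S j) = beta (S j)).
  { intros j Hj. unfold b, beta_ext. simpl. rewrite (proj2 (Nat.eqb_neq j n)) by lia. reflexivity. }
  assert (bjr : forall j, (j < n)%nat -> -1 <= b (S j) <= 1).
  { intros j Hj. rewrite bj by auto. apply hbeta; lia. }
  assert (dneg : forall j, (j < n)%nat -> (z < a j \/ a (S j) < z) -> s j - s (S j) < 0).
  { intros j Hj Hs. unfold s.
    assert (a j < a (S j)) by (apply mono; lia).
    assert (/ (z - a j) ^ (2 * m + 1) < / (z - a (S j)) ^ (2 * m + 1)).
    { apply inv_pow_mono; lra. }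
    lra. }
  assert (D : forall i, (i <= n)%nat -> z <> a i).
  { intros i Hi. destruct hz as [H|[H|[k [Hk [_ [H1 H2]]]]]].
    - assert (a O <= a i) by (apply monole; lia). unfold a in *; lra.
    - assert (a i <= a n) by (apply monole; lia). unfold a in *; lra.
    - destruct (le_lt_dec i (k - 1)).
      + assert (a i <= a (k-1)%nat) by (apply monole; lia). unfold a in *; lra.
      + assert (a k <= a i) by (apply monole; lia). unfold a in *; lra. }
  assert (H0 : forall x, (forall i, (i <= n)%nat -> x <> a i) -> Tfun n V beta x = G c a n 0 x).
  { intros x Dx. unfold Tfun, G. apply sum_eq. intros i Hi.
      specialize (Dx i Hi). assert (x - a i <> 0) by lra. unfold c, a, b in *. simpl. field. lra. }
  rewrite (Derive_n_G _ c a n H0) by auto.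
  assert (HG : G c a n (2 * m) z = INR (fact (2 * m)) *
     sum_f_R0 (fun i => / 2 * (b (S i) - b i) * s i) n).
  { unfold G. rewrite scal_sum. apply sum_eq. intros i Hi.
    unfold c, s. rewrite pow_mult. replace ((-1)^2) with 1 by ring. rewrite pow1.
    replace (S (2 * m)) with (2 * m + 1)%nat by lia. ring. }
  rewrite HG. apply Rmult_integral_contrapositive_currified. apply INR_fact_neq_0.
  destruct hz as [H|[H|[k [Hk [Hbk [H1 H2]]]]]].
  -
    assert (sum_f_R0 (fun i => / 2 * (b (S i) - b i) * s i) n <= s n).
    { apply keyB; auto. intros j Hj. specialize (bjr j Hj).
      assert (s j - s (S j) < 0). { apply dneg; auto. left.
        assert (a O <= a j) by (apply monole; lia). unfold a in *; lra. }
      nra. }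
    assert (s n < 0). { apply inv_pow_neg. assert (a O <= a n) by (apply monole; lia). unfold a in *; lra. }
    lra.
  - assert (s O <= sum_f_R0 (fun i => / 2 * (b (S i) - b i) * s i) n).
    { apply keyA; auto. intros j Hj. specialize (bjr j Hj).
      assert (s j - s (S j) < 0). { apply dneg; auto. right.
        assert (a (S j) <= a n) by (apply monole; lia). unfold a in *; lra. }
      nra. }
    assert (0 < s O). { apply inv_pow_pos. assert (a O <= a n) by (apply monole; lia). unfold a in *; lra. }
    lra.
  - destruct Hbk as [Hbk|Hbk].
    + assert (s O <= sum_f_R0 (fun i => / 2 * (b (S i) - b i) * s i) n).
      { apply keyA; auto. intros j Hj. specialize (bjr j Hj).
        destruct (Nat.eq_dec (S j) k) as [E|E].
        - rewrite bj by auto. rewrite E, Hbk. lra.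
        - assert (s j - s (S j) < 0). { apply dneg; auto.
            destruct (le_lt_dec (S j) (k - 1)).
            + right. assert (a (S j) <= a (k-1)%nat) by (apply monole; lia). unfold a in *; lra.
            + left. assert (a k <= a j) by (apply monole; lia). unfold a in *; lra. }
          nra. }
      assert (0 < s O). { apply inv_pow_pos. assert (a O <= a (k-1)%nat) by (apply monole; lia). unfold a in *; lra. }
      lra.
    + assert (sum_f_R0 (fun i => / 2 * (b (S i) - b i) * s i) n <= s n).
      { apply keyB; auto. intros j Hj. specialize (bjr j Hj).
        destruct (Nat.eq_dec (S j) k) as [E|E].
        - rewrite bj by auto. rewrite E, Hbk. lra.
        - assert (s j - s (S j) < 0). { apply dneg; auto.
            destruct (le_lt_dec (S j) (k - 1)).
            + right. assert (a (S j) <= a (k-1)%nat) by (apply monole; lia). unfold a in *; lra.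
            + left. assert (a k <= a j) by (apply monole; lia). unfold a in *; lra. }
          nra. }
      assert (s n < 0). { apply inv_pow_neg. assert (a k <= a n) by (apply monole; lia). unfold a in *; lra. }
      lra.
Qed.
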